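(* Let $G$ be a simple undirected graph containing the edge $\{v_1,v_2\}$, and let $G'$ be the graph obtained from $G$ by removing the edge $\{v_1,v_2\}$ (same vertex set). If $s\in(-\infty,0]\cup[1,+\infty)$, then $\rho(M_G(s))\geq \rho(M_{G'}(s))$.
   Context: For a simple undirected graph $G$ on $n$ vertices with adjacency matrix $A$, diagonal degree matrix $D$ and $n\times n$ identity matrix $I$, and a real parameter $s$, the deformed Laplacian matrix of $G$ is $M_G(s)=I-sA+s^2(D-I)$. For a real symmetric matrix $B$, $\rho(B)$ denotes its spectral radius, here meaning its largest eigenvalue $\sup_{|x|=1}\langle x,Bx\rangle$. *)

(* Defs.v *)
From HB Require Import structures.
From mathcomp Require Import all_boot all_order all_algebra.
From mathcomp Require Import boolp classical_sets reals.
Set Implicit Arguments. Unset Strict Implicit. Unset Printing Implicit Defensive.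
Import Order.TTheory GRing.Theory Num.Theory.
Local Open Scope ring_scope.
Local Open Scope classical_set_scope.

Definition simple_graph (n : nat) (e : rel 'I_n) : Prop :=
  symmetric e /\ irreflexive e.

Definition adjmx (R : realType) (n : nat) (e : rel 'I_n) : 'M[R]_n :=
  \matrix_(i, j) (e i j)%:R.

Definition degmx (R : realType) (n : nat) (e : rel 'I_n) : 'M[R]_n :=
  \matrix_(i, j) ((i == j)%:R * (#|[set k | e i k]|)%:R).

Definition deformed_laplacian (R : realType) (n : nat) (e : rel 'I_n) (s : R)
  : 'M[R]_n :=
  1%:M - s *: adjmx R e + (s ^+ 2) *: (degmx R e - 1%:M).

(* largest eigenvalue of a real symmetric matrix: sup_{|x|=1} <x, B x> *)
Definition rho (R : realType) (n : nat) (B : 'M[R]_n) : R :=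
  sup [set (x *m B *m x^T) 0 0 | x in [set x : 'rV[R]_n | (x *m x^T) 0 0 = 1]].

Definition remove_edge (n : nat) (e : rel 'I_n) (v1 v2 : 'I_n) : rel 'I_n :=
  fun x y => e x y && ~~ (((x == v1) && (y == v2)) || ((x == v2) && (y == v1))).

(* Main.v *)
Require Import Defs.
From HB Require Import structures.
From mathcomp Require Import all_boot all_order all_algebra.
From mathcomp Require Import boolp classical_sets reals.
From mathcomp Require Import ring lra.
Import Order.TTheory GRing.Theory Num.Theory.
Local Open Scope ring_scope.

Section Aux.
Variables (R : realType) (n : nat).
Implicit Types (x : 'rV[R]_n) (f g : 'I_n -> 'I_n -> R).

Definition Q f x := \sum_j \sum_i x 0 i * f i j * x 0 j.

Lemma QE (B : 'M[R]_n) x : (x *m B *m x^T) 0 0 = Q (fun i j => B i j) x.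
Proof.
rewrite /Q !mxE; apply: eq_bigr => j _; rewrite ?mxE big_distrl /=.
by [].
Qed.

Lemma normE x : (x *m x^T) 0 0 = \sum_i x 0 i ^+ 2.
Proof. by rewrite mxE; apply: eq_bigr => i _; rewrite mxE expr2. Qed.

Lemma Qext f g x : (forall i j, f i j = g i j) -> Q f x = Q g x.
Proof. by move=> H; rewrite /Q; apply: eq_bigr => j _; apply: eq_bigr => i _; rewrite H. Qed.

Lemma QB f g x : Q (fun i j => f i j - g i j) x = Q f x - Q g x.
Proof.
rewrite /Q -sumrB; apply: eq_bigr => j _; rewrite -sumrB.
by apply: eq_bigr => i _; ring.
Qed.

Lemma QD f g x : Q (fun i j => f i j + g i j) x = Q f x + Q g x.
Proof.
rewrite /Q -big_split; apply: eq_bigr => j _; rewrite -big_split.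
by apply: eq_bigr => i _; rewrite /= mulrDr mulrDl.
Qed.

Lemma QZ c f x : Q (fun i j => c * f i j) x = c * Q f x.
Proof.
rewrite /Q big_distrr; apply: eq_bigr => j _; rewrite big_distrr.
by apply: eq_bigr => i _; rewrite /= mulrCA !mulrA.
Qed.

Lemma Qdelta a b x :
  Q (fun i j => (i == a)%:R * (j == b)%:R) x = x 0 a * x 0 b.
Proof.
rewrite /Q (bigD1 b) //= [X in _ + X]big1; last first.
  move=> j Hj; rewrite (negbTE Hj); apply: big1 => i _; by rewrite !(mulr0, mul0r).
rewrite addr0 (bigD1 a) //= [X in _ + X]big1; last first.
  by move=> i Hi; rewrite (negbTE Hi) !(mulr0, mul0r).
by rewrite !eqxx addr0 !mulr1.
Qed.

Lemma Qle f g x : (forall i j, x 0 i * f i j * x 0 j <= x 0 i * g i j * x 0 j) ->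
  Q f x <= Q g x.
Proof.
by move=> H; rewrite /Q; apply: ler_sum => j _; apply: ler_sum => i _.
Qed.

Lemma Qle2 f x (y : 'rV[R]_n) : (forall i j, x 0 i * f i j * x 0 j <= y 0 i * f i j * y 0 j) ->
  Q f x <= Q f y.
Proof.
by move=> H; rewrite /Q; apply: ler_sum => j _; apply: ler_sum => i _.
Qed.

Lemma coord_le1 x : \sum_i x 0 i ^+ 2 = 1 -> forall i, `|x 0 i| <= 1.
Proof.
move=> H i.
have : x 0 i ^+ 2 <= 1.
  rewrite -H (bigD1 i) //= lerDl; apply: sumr_ge0 => k _; exact: sqr_ge0.
have h1 := normr_ge0 (x 0 i).
have h2 : `|x 0 i| ^+ 2 = x 0 i ^+ 2 by rewrite real_normK ?num_real.
nra.
Qed.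

Lemma Qbound f x : \sum_i x 0 i ^+ 2 = 1 ->
  Q f x <= \sum_j \sum_i `|f i j|.
Proof.
move=> H; apply: ler_sum => j _; apply: ler_sum => i _.
have ha := coord_le1 x H i; have hb := coord_le1 x H j.
have a0 := normr_ge0 (x 0 i); have b0 := normr_ge0 (x 0 j).
have m0 := normr_ge0 (f i j).
have am0 := mulr_ge0 a0 m0.
apply: le_trans (ler_norm _) _.
rewrite !normrM.
nra.
Qed.

End Aux.
Arguments Q {R n}.

Section Graph.
Variables (R : realType) (n : nat) (e : rel 'I_n) (v1 v2 : 'I_n).

Lemma cardE' (g : rel 'I_n) i : #|[set k | g i k]%classic| = #|[set k | g i k]|.
Proof. by apply: eq_card => k; rewrite !inE; apply/idP/idP; rewrite in_setE. Qed.

Lemma dlE (g : rel 'I_n) (s : R) i j : deformed_laplacian g s i j =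
  (i == j)%:R - s * (g i j)%:R +
  s ^+ 2 * ((i == j)%:R * (#|[set k | g i k]|)%:R - (i == j)%:R).
Proof. by rewrite /deformed_laplacian !mxE cardE'. Qed.

Hypotheses (hg : simple_graph e) (he : e v1 v2).

Lemma v12 : (v1 == v2) = false.
Proof. apply/negbTE/eqP => h; move: he; rewrite h; by case: hg => _ ->. Qed.

Lemma he21 : e v2 v1.
Proof. by case: hg => hs _; rewrite hs. Qed.

Lemma degE i : #|[set k | e i k]| =
  (#|[set k | remove_edge e v1 v2 i k]| + (i == v1) + (i == v2))%N.
Proof.
have h12 := v12.
case: (i =P v1) => [->|h1].
  rewrite (cardsD1 v2 [set k | e v1 k]) inE he h12 /= addn0 addnC.
  congr (_ + _)%N; apply: eq_card => k; rewrite !inE /remove_edge eqxx h12 /=.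
  by rewrite orbF andbC.
case: (i =P v2) => [->|h2].
  rewrite (cardsD1 v1 [set k | e v2 k]) inE he21 /= addn0 addnC.
  congr (_ + _)%N; apply: eq_card => k; rewrite !inE /remove_edge eqxx /= (eq_sym v2 v1) h12 /=.
  by rewrite andbC.
rewrite !addn0; apply: eq_card => k; rewrite !inE /remove_edge.
by move/eqP/negbTE: h1 => ->; move/eqP/negbTE: h2 => ->; rewrite andbT.
Qed.

Definition Dm (s : R) (i j : 'I_n) : R :=
  s ^+ 2 * ((i == v1)%:R * (j == v1)%:R + (i == v2)%:R * (j == v2)%:R) -
  s * ((i == v1)%:R * (j == v2)%:R + (i == v2)%:R * (j == v1)%:R).

Lemma keyE s i j : deformed_laplacian (remove_edge e v1 v2) s i j =
  deformed_laplacian e s i j - Dm s i j.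
Proof.
have h12 := v12; have h21 : (v2 == v1) = false by rewrite eq_sym.
rewrite !dlE /Dm (degE i) !natrD.
case: eqP => [<-|hij].
  have hii : e i i = false by case: hg => _ ->.
  rewrite /remove_edge hii /=.
  case h1: (i == v1); case h2: (i == v2) => /=.
  - by move: h12; rewrite -(eqP h1) h2.
  all: set c := (#|_|%:R); rewrite /=.
  all: rewrite ?(mul1r, mulr1, mul0r, mulr0, addr0, add0r, subr0, sub0r). 
  1-3: ring.
move/eqP/negbTE: hij => hij.
have e21 := he21.
rewrite /remove_edge; case h1: (i==v1); case h2: (j==v2); case h3: (i==v2);
  case h4: (j==v1); rewrite /= ?andbT ?andbF /=.
all: try by move: h12; rewrite -(eqP h1) h3.
all: try by move: h12; rewrite -(eqP h4) h2.
all: try (rewrite (eqP h1) (eqP h2) he).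
all: try (rewrite (eqP h3) (eqP h4) e21).
all: rewrite ?(mul1r, mulr1, mul0r, mulr0, addr0, add0r, subr0, sub0r).
all: try (exfalso; move/negbT/eqP: hij; apply; by rewrite (eqP h1) (eqP h4)).
all: try (exfalso; move/negbT/eqP: hij; apply; by rewrite (eqP h3) (eqP h2)).
all: ring.
Qed.

End Graph.

Section Main.
Variables (R : realType) (n : nat) (e : rel 'I_n) (v1 v2 : 'I_n).
Hypotheses (hg : simple_graph e) (he : e v1 v2).

Lemma QkeyE (s : R) (x : 'rV[R]_n) :
  Q (fun i j => deformed_laplacian (remove_edge e v1 v2) s i j) x =
  Q (fun i j => deformed_laplacian e s i j) x -
  (s ^+ 2 * (x 0 v1 * x 0 v1 + x 0 v2 * x 0 v2) -
   s * (x 0 v1 * x 0 v2 + x 0 v2 * x 0 v1)).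
Proof.
have -> : Q (fun i j => deformed_laplacian (remove_edge e v1 v2) s i j) x =
  Q (fun i j => deformed_laplacian e s i j - Dm R n v1 v2 s i j) x.
  by apply: Qext => i j; exact: (@keyE R n e v1 v2 hg he s i j).
by rewrite QB /Dm QB !QZ !QD !Qdelta.
Qed.

Lemma offdiag_ge0 (g : rel 'I_n) (s : R) i j : s <= 0 -> (i == j) = false ->
  0 <= deformed_laplacian g s i j.
Proof.
move=> hs hij; rewrite dlE hij.
rewrite ?(mul1r, mulr1, mul0r, mulr0, addr0, add0r, subr0, sub0r).
have := ler0n R (g i j); nra.
Qed.

End Main.

Section Rho.
Local Open Scope classical_set_scope.
Variables (R : realType) (n : nat).

Lemma rho_le (B B' : 'M[R]_n) :
  (forall x : 'rV[R]_n, (x *m x^T) 0 0 = 1 ->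
     exists2 y : 'rV[R]_n, (y *m y^T) 0 0 = 1 &
       (x *m B' *m x^T) 0 0 <= (y *m B *m y^T) 0 0) ->
  rho B' <= rho B.
Proof.
move=> H; rewrite /rho.
have [ex|nox] := pselect (exists x : 'rV[R]_n, (x *m x^T) 0 0 = 1); last first.
  have E : forall C : 'M[R]_n, [set (x *m C *m x^T) 0 0 | x in
       [set x : 'rV[R]_n | (x *m x^T) 0 0 = 1]] = set0.
    move=> C; apply/seteqP; split => // y [x hx hy]; exfalso; apply: nox; by exists x.
  by rewrite !E.
case: ex => x0 hx0.
have hS : has_sup [set (x *m B *m x^T) 0 0 | x in
       [set x : 'rV[R]_n | (x *m x^T) 0 0 = 1]].
  split; first by exists ((x0 *m B *m x0^T) 0 0); exists x0.
  exists (\sum_j \sum_i `|B i j|) => _ [y hy <-]; rewrite QE; apply: Qbound.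
  by rewrite -normE.
apply: ge_sup; first by exists ((x0 *m B' *m x0^T) 0 0); exists x0.
move=> _ [x hx <-]; have [y hy hxy] := H x hx.
apply: le_trans hxy _; apply: sup_upper_bound => //; by exists y.
Qed.

End Rho.

Theorem theorem3p4 (R : realType) (n : nat) (e : rel 'I_n) (v1 v2 : 'I_n)
  (s : R) :
  simple_graph e -> e v1 v2 -> (s <= 0 \/ 1 <= s) ->
  rho (deformed_laplacian e s) >=
  rho (deformed_laplacian (remove_edge e v1 v2) s).
Proof.
move=> hg he hs; apply: rho_le => x hx.
case: hs => hs; last first.
  exists x => //; rewrite !QE (@QkeyE R n e v1 v2 hg he).
  set a := x 0 v1; set b := x 0 v2.
  have h1 := sqr_ge0 (s * a - b).
  have h2 : 0 <= (s ^+ 2 - 1) * b ^+ 2.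
    apply: mulr_ge0; last exact: sqr_ge0.
    rewrite subr_ge0 expr2; have := ler_pM ler01 ler01 hs hs; by rewrite mulr1.
  have : 0 <= s ^+ 2 * (a * a + b * b) - s * (a * b + b * a) by nra.
  lra.
exists (\row_i `|x 0 i|).
  rewrite normE -hx normE; apply: eq_bigr => i _; rewrite mxE real_normK ?num_real //.
rewrite !QE; apply: (@le_trans _ _ (Q (fun i j => deformed_laplacian (remove_edge e v1 v2) s i j) (\row_i `|x 0 i|))).
  have hy : forall k, (\row_i `|x 0 i|) 0 k = `|x 0 k| by move=> k; rewrite mxE.
  apply: Qle2 => i j; rewrite !hy.
  case hij: (i == j).
    rewrite -(eqP hij).
    have h : `|x 0 i| * `|x 0 i| = x 0 i * x 0 i.
      by rewrite -normrM ger0_norm // -expr2 sqr_ge0.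
    by rewrite mulrAC [X in _ <= X]mulrAC h.
  have hM := @offdiag_ge0 R n (remove_edge e v1 v2) s i j hs hij.
  rewrite mulrAC [X in _ <= X]mulrAC -normrM.
  by apply: (ler_wpM2r hM); apply: ler_norm.
rewrite (@QkeyE R n e v1 v2 hg he) !mxE.
have a0 := normr_ge0 (x 0 v1); have b0 := normr_ge0 (x 0 v2).
set a := `|x 0 v1|; set b := `|x 0 v2|.
have : 0 <= s ^+ 2 * (a * a + b * b) - s * (a * b + b * a).
  have hab := mulr_ge0 a0 b0.
  have h1 : 0 <= s ^+ 2 * (a * a + b * b).
    by apply: mulr_ge0; [exact: sqr_ge0 | apply: addr_ge0; apply: mulr_ge0].
  have h2 : 0 <= (- s) * (a * b + b * a).
    by apply: mulr_ge0; [rewrite oppr_ge0 | rewrite [b * a]mulrC addr_ge0].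
  lra.
lra.
Qed.
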